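(* Let $a<b$ and let $f,g:[a,b]\to\mathbb{R}$ be differentiable on $[a,b]$ (one-sided derivatives at the endpoints), and suppose $f$ and $g$ are twice differentiable at the point $a$ (from the right). Suppose $g(a)\neq g(b)$ and put $K=\frac{f(b)-f(a)}{g(b)-g(a)}$. If $$\bigl[f'(a)-K\,g'(a)\bigr]\cdot\bigl[f''(a)-K\,g''(a)\bigr]> 0,$$ then there exists $\eta\in(a,b)$ such that $$f'(\eta)-\frac{f(\eta)-f(a)}{\eta-a}=K\left[g'(\eta)-\frac{g(\eta)-g(a)}{\eta-a}\right].$$
   Context: Differentiability on a closed interval $[a,b]$ means differentiability on $(a,b)$ together with existence of the one-sided derivatives at $a$ and $b$. *)

(* Defs.v *)
From Stdlib Require Import Reals.
From Coquelicot Require Import Coquelicot.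
Open Scope R_scope.

Definition is_right_derive (f : R -> R) (x l : R) : Prop :=
  filterlim (fun h => (f (x + h) - f x) / h) (at_right 0) (locally l).

Definition is_left_derive (f : R -> R) (x l : R) : Prop :=
  filterlim (fun h => (f (x + h) - f x) / h) (at_left 0) (locally l).

Definition derive_on_closed (f f1 : R -> R) (a b : R) : Prop :=
  (forall x, a < x < b -> is_derive f x (f1 x)) /\
  is_right_derive f a (f1 a) /\
  is_left_derive f b (f1 b).

(* Main.v *)
Require Import Defs.
From Stdlib Require Import Reals Lra.
From Coquelicot Require Import Coquelicot.
Open Scope R_scope.

Lemma ball_R (x y e : R) : ball x e y <-> Rabs (y - x) < e.
Proof. reflexivity. Qed.

Lemma ev_lt {T} (F : (T -> Prop) -> Prop) {FF : Filter F} (u : T -> R) (L c : R) :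
  filterlim u F (locally L) -> L < c -> F (fun t => u t < c).
Proof.
  intros H Hc. apply filterlim_locally with (eps := mkposreal (c - L) ltac:(lra)) in H.
  eapply filter_imp; [|exact H]. intros t Ht. apply ball_R in Ht. simpl in Ht.
  destruct (Rabs_def2 _ _ Ht). unfold minus, plus, opp in *; simpl in *. lra.
Qed.

Lemma ev_gt {T} (F : (T -> Prop) -> Prop) {FF : Filter F} (u : T -> R) (L c : R) :
  filterlim u F (locally L) -> c < L -> F (fun t => c < u t).
Proof.
  intros H Hc. apply filterlim_locally with (eps := mkposreal (L - c) ltac:(lra)) in H.
  eapply filter_imp; [|exact H]. intros t Ht. apply ball_R in Ht. simpl in Ht.
  destruct (Rabs_def2 _ _ Ht). unfold minus, plus, opp in *; simpl in *. lra.
Qed.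

Lemma onesided_cont (h : R -> R) (x l : R) (F : (R -> Prop) -> Prop) {FF : Filter F} :
  filterlim (fun t => (h (x + t) - h x) / t) F (locally l) ->
  F (fun t => t <> 0) -> filterlim (fun t => t) F (locally 0) ->
  filterlim (fun t => h (x + t)) F (locally (h x)).
Proof.
  intros Hq Hnz Hid.
  apply filterlim_ext_loc with (f := fun t => h x + t * ((h (x + t) - h x) / t)).
  { eapply filter_imp; [|exact Hnz]. intros t Ht. simpl. field. exact Ht. }
  assert (E : plus (h x) (mult 0 l) = h x) by (unfold plus, mult; simpl; ring).
  enough (HH : filterlim (fun t => h x + t * ((h (x + t) - h x) / t)) F (locally (plus (h x) (mult 0 l))))
    by (rewrite E in HH; exact HH).
  apply (@filterlim_comp_2 R R R R F (locally (h x)) (locally (mult 0 l)) _ FF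
     (fun _ => h x) (fun t => t * ((h (x + t) - h x) / t)) plus).
  - apply filterlim_const.
  - apply (@filterlim_comp_2 R R R R F (locally 0) (locally l) _ FF
      (fun t => t) (fun t => (h (x + t) - h x) / t) mult); auto.
    apply (@filterlim_mult R_AbsRing).
  - apply (@filterlim_plus R_AbsRing R_NormedModule).
Qed.

Lemma right_cont h x l : is_right_derive h x l ->
  filterlim (fun t => h (x + t)) (at_right 0) (locally (h x)).
Proof.
  intro H. apply (@onesided_cont h x l _ _); [exact H| |].
  - exists (mkposreal 1 Rlt_0_1). intros y _ Hy. lra.
  - intros P HP. apply filter_le_within. exact HP.
Qed.

Lemma left_cont h x l : is_left_derive h x l ->
  filterlim (fun t => h (x + t)) (at_left 0) (locally (h x)).
Proof.
  intro H. apply (@onesided_cont h x l _ _); [exact H| |].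
  - exists (mkposreal 1 Rlt_0_1). intros y _ Hy. lra.
  - intros P HP. apply filter_le_within. exact HP.
Qed.
Lemma phi_der (h h1 : R -> R) (a c : R) : a < c -> is_derive h c (h1 c) ->
  is_derive (fun x => (h x - h a)/(x-a)) c ((h1 c * (c-a) - (h c - h a))/(c-a)^2).
Proof.
  intros Hac Hd.
  assert (D1 : is_derive (fun x => h x - h a) c (h1 c)).
  { replace (h1 c) with (h1 c - 0) by ring. apply (@is_derive_minus R_AbsRing R_NormedModule); auto. apply (@is_derive_const R_AbsRing R_NormedModule). }
  assert (D2 : is_derive (fun x => x - a) c 1).
  { replace 1 with (1 - 0) by ring. apply (@is_derive_minus R_AbsRing R_NormedModule). apply (@is_derive_id R_AbsRing). apply (@is_derive_const R_AbsRing R_NormedModule). }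
  replace ((h1 c * (c-a) - (h c - h a))/(c-a)^2) with ((h1 c * (c-a) - (h c - h a) * 1)/(c-a)^2) by (rewrite Rmult_1_r; reflexivity).
  apply (is_derive_div _ _ c _ _ D1 D2). lra.
Qed.

Lemma pos_of_div q t : 0 < t -> 0 < q / t -> 0 < q.
Proof. intros Ht Hq. replace q with (q / t * t) by (field; lra). apply Rmult_lt_0_compat; lra. Qed.

Lemma core (a b : R) (h h1 : R -> R) (h2 : R) :
  a < b -> (forall x, a < x < b -> is_derive h x (h1 x)) ->
  is_right_derive h a (h1 a) -> is_left_derive h b (h1 b) ->
  is_right_derive h1 a h2 -> h a = h b -> 0 < h1 a -> 0 < h2 ->
  exists c, a < c < b /\ h1 c = (h c - h a) / (c - a).
Proof.
  intros Hab Hd Hra Hlb H2 Hhab Hh1 Hh2.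
  destruct (ev_gt (at_right 0) _ h2 0 H2 Hh2) as [d1 Hd1].
  set (x0 := a + Rmin d1 (b - a) / 2).
  assert (Hm1 := Rmin_l d1 (b - a)). assert (Hm2 := Rmin_r d1 (b - a)).
  assert (Hm3 : 0 < Rmin d1 (b - a)) by (apply Rmin_glb_lt; [apply cond_pos|lra]).
  assert (Hx0 : a < x0 < b) by (unfold x0; lra).
  assert (A : forall t, 0 < t <= x0 - a -> h1 a < h1 (a + t)).
  { intros t Ht. assert (P := Hd1 t). simpl in P.
    assert (Hq : 0 < (h1 (a + t) - h1 a) / t).
    { apply P; [|lra]. apply ball_R. unfold x0 in Ht. rewrite Rminus_0_r, Rabs_pos_eq; lra. }
    apply pos_of_div in Hq; lra. }
  set (ht := fun x => h (Rmax a x)).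
  set (df := fun x => if Rle_dec x a then h1 a + 1 else h1 x).
  assert (Hcont_in : forall x, a < x < b -> continuity_pt h x).
  { intros x Hx. apply continuity_pt_filterlim. apply (@ex_derive_continuous R_AbsRing R_NormedModule).
    eexists; apply Hd; exact Hx. }
  destruct (MVT_gen ht a x0 df) as [c [Hc He]].
  { rewrite Rmin_left, Rmax_right by lra. intros x Hx.
    unfold df. destruct (Rle_dec x a); [lra|].
    apply is_derive_ext_loc with (f := h); [|apply Hd; lra].
    assert (Hp : 0 < x - a) by lra.
    exists (mkposreal _ Hp). intros t Ht. change (Rabs (t - x) < x - a) in Ht.
    destruct (Rabs_def2 _ _ Ht). unfold ht. rewrite Rmax_right; [reflexivity|lra]. }
  { rewrite Rmin_left, Rmax_right by lra. intros x Hx.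
    destruct (Req_dec x a) as [->|Hxa].
    - apply continuity_pt_filterlim. apply filterlim_locally. intro eps.
      destruct (proj1 (filterlim_locally _ _) (right_cont _ _ _ Hra) eps) as [d Hdd].
      exists d. intros y Hy. change (Rabs (y - a) < d) in Hy.
      unfold ht. rewrite (Rmax_left a a) by lra.
      destruct (Rle_dec y a).
      + rewrite Rmax_left by lra. apply ball_center.
      + rewrite Rmax_right by lra. replace y with (a + (y - a)) by ring.
        apply Hdd; [|lra]. apply ball_R. rewrite Rminus_0_r. exact Hy.
    - apply continuity_pt_ext_loc with (f := h).
      + assert (Hp : 0 < x - a) by lra.
        exists (mkposreal _ Hp). intros t Ht. change (Rabs (t - x) < x - a) in Ht.
        destruct (Rabs_def2 _ _ Ht). unfold ht. rewrite Rmax_right; [reflexivity|lra].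
      + apply Hcont_in. lra. }
  rewrite Rmin_left, Rmax_right in Hc by lra.
  unfold ht in He. rewrite (Rmax_left a a), (Rmax_right a x0) in He by lra.
  assert (Hdf : h1 a < df c).
  { unfold df. destruct (Rle_dec c a); [lra|].
    replace c with (a + (c - a)) by ring. apply A. lra. }
  set (P := (h x0 - h a) / (x0 - a)).
  assert (HP : h1 a < P).
  { unfold P. rewrite He. replace (df c * (x0 - a) / (x0 - a)) with (df c) by (field; lra). exact Hdf. }
  clear Hc He Hdf df ht A Hd1.
  destruct (ev_lt (at_right 0) _ (h1 a) P Hra HP) as [d2 Hd2].
  assert (Hn1 := Rmin_l d2 (x0 - a)). assert (Hn2 := Rmin_r d2 (x0 - a)).
  assert (Hn3 : 0 < Rmin d2 (x0 - a)) by (apply Rmin_glb_lt; [apply cond_pos|lra]).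
  set (t1 := Rmin d2 (x0 - a) / 2).
  assert (Ht1 : 0 < t1 < x0 - a) by (unfold t1; lra).
  assert (Hphi1 : (h (a + t1) - h a) / (a + t1 - a) < P).
  { replace (a + t1 - a) with t1 by ring. apply Hd2; [|lra].
    apply ball_R. rewrite Rminus_0_r, Rabs_pos_eq; unfold t1; lra. }
  assert (HPp : 0 < P * (x0 - a)) by (apply Rmult_lt_0_compat; lra).
  destruct (proj1 (filterlim_locally _ _) (left_cont _ _ _ Hlb) (mkposreal _ HPp)) as [d3 Hd3].
  assert (Hk1 := Rmin_l d3 (b - x0)). assert (Hk2 := Rmin_r d3 (b - x0)).
  assert (Hk3 : 0 < Rmin d3 (b - x0)) by (apply Rmin_glb_lt; [apply cond_pos|lra]).
  set (t3 := Rmin d3 (b - x0) / 2).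
  assert (Ht3 : 0 < t3 < b - x0) by (unfold t3; lra).
  assert (Hb3 : Rabs (h (b + - t3) - h b) < P * (x0 - a)).
  { apply (Hd3 (- t3)); [|lra]. apply ball_R. rewrite Rminus_0_r, Rabs_Ropp, Rabs_pos_eq; unfold t3; lra. }
  assert (Hphi2 : (h (b + - t3) - h a) / (b + - t3 - a) < P).
  { destruct (Rabs_def2 _ _ Hb3).
    apply Rmult_lt_reg_r with (b + - t3 - a); [lra|].
    replace ((h (b + - t3) - h a) / (b + - t3 - a) * (b + - t3 - a)) with (h (b + - t3) - h a) by (field; lra).
    assert (P * (x0 - a) < P * (b + - t3 - a)) by (apply Rmult_lt_compat_l; lra).
    lra. }
  set (phi := fun x => (h x - h a) / (x - a)).
  assert (Hder : forall x, a < x < b -> is_derive phi x ((h1 x * (x-a) - (h x - h a))/(x-a)^2)).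
  { intros x Hx. apply phi_der; [lra|]. apply Hd; exact Hx. }
  destruct (continuity_ab_maj phi (a + t1) (b + - t3)) as [M [HM1 HM2]]; [lra| |].
  { intros x Hx. apply continuity_pt_filterlim. apply (@ex_derive_continuous R_AbsRing R_NormedModule).
    eexists; apply Hder; lra. }
  assert (HMx0 : P <= phi M) by (apply (HM1 x0); lra).
  assert (HMne1 : a + t1 <> M) by (intro E; subst M; unfold phi in HMx0; lra).
  assert (HMne2 : b + - t3 <> M) by (intro E; subst M; unfold phi in HMx0; lra).
  assert (HMin : a < M < b) by lra.
  assert (Hdl := proj1 (is_derive_Reals _ _ _) (Hder M HMin)).
  assert (Z := deriv_maximum phi (a + t1) (b + - t3) M (exist _ _ Hdl) ltac:(lra) ltac:(lra)
     (fun x H1 H3 => HM1 x (conj (Rlt_le _ _ H1) (Rlt_le _ _ H3)))).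
  assert (Z' : (h1 M * (M - a) - (h M - h a)) / (M - a) ^ 2 = 0) by exact Z.
  exists M. split; [exact HMin|].
  assert (Hnum : h1 M * (M - a) - (h M - h a) = 0).
  { replace (h1 M * (M - a) - (h M - h a)) with ((h1 M * (M - a) - (h M - h a)) / (M - a) ^ 2 * (M - a) ^ 2) by (field; lra).
    rewrite Z'. ring. }
  apply Rmult_eq_reg_r with (M - a); [|lra].
  replace ((h M - h a) / (M - a) * (M - a)) with (h M - h a) by (field; lra). lra.
Qed.

Lemma lin_lim (F : (R -> Prop) -> Prop) {FF : Filter F} (u v : R -> R) (x y al be : R) :
  filterlim u F (locally x) -> filterlim v F (locally y) ->
  filterlim (fun t => al * u t + be * v t) F (locally (al * x + be * y)).
Proof.
  intros Hu Hv.
  apply (@filterlim_comp_2 R R R R F (locally (al * x)) (locally (be * y)) _ FF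
     (fun t => al * u t) (fun t => be * v t) plus).
  - apply (filterlim_comp _ _ _ u (fun z => scal al z) F (locally x)); [exact Hu|].
    apply (@filterlim_scal_r R_AbsRing R_NormedModule).
  - apply (filterlim_comp _ _ _ v (fun z => scal be z) F (locally y)); [exact Hv|].
    apply (@filterlim_scal_r R_AbsRing R_NormedModule).
  - apply (@filterlim_plus R_AbsRing R_NormedModule).
Qed.

Lemma lin_rd (F : (R -> Prop) -> Prop) {FF : Filter F} (f g : R -> R) (x lf lg al be : R) :
  filterlim (fun h => (f (x + h) - f x) / h) F (locally lf) ->
  filterlim (fun h => (g (x + h) - g x) / h) F (locally lg) ->
  filterlim (fun h => ((fun z => al * f z + be * g z) (x + h) - (fun z => al * f z + be * g z) x) / h)
    F (locally (al * lf + be * lg)).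
Proof.
  intros Hf Hg. eapply filterlim_ext; [|apply (lin_lim F _ _ _ _ al be Hf Hg)].
  intro t. simpl. unfold Rdiv. ring.
Qed.

Lemma lin_der (f g : R -> R) (x lf lg al be : R) :
  is_derive f x lf -> is_derive g x lg ->
  is_derive (fun z => al * f z + be * g z) x (al * lf + be * lg).
Proof.
  intros Hf Hg. apply (@is_derive_plus R_AbsRing R_NormedModule).
  - apply is_derive_scal. exact Hf.
  - apply is_derive_scal. exact Hg.
Qed.

Lemma main_s (s : R) (a b : R) (f g f1 g1 : R -> R) (f2a g2a : R) :
  s = 1 \/ s = -1 ->
  a < b ->
  derive_on_closed f f1 a b ->
  derive_on_closed g g1 a b ->
  is_right_derive f1 a f2a ->
  is_right_derive g1 a g2a ->
  g a <> g b ->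
  let K := (f b - f a) / (g b - g a) in
  0 < s * (f1 a - K * g1 a) -> 0 < s * (f2a - K * g2a) ->
  exists eta, a < eta < b /\
    f1 eta - (f eta - f a) / (eta - a) =
    K * (g1 eta - (g eta - g a) / (eta - a)).
Proof.
  intros Hs Hab [Fi [Fa Fb]] [Gi [Ga Gb]] F2 G2 Hg K P1 P2.
  destruct (core a b (fun z => s * f z + (- s * K) * g z) (fun z => s * f1 z + (- s * K) * g1 z)
     (s * f2a + (- s * K) * g2a)) as [c [Hc He]].
  - exact Hab.
  - intros x Hx. apply lin_der; auto.
  - apply (lin_rd (at_right 0)); auto.
  - apply (lin_rd (at_left 0)); auto.
  - apply (lin_rd (at_right 0)); auto.
  - assert (g b - g a <> 0) by (intro; apply Hg; lra).
    unfold K. field. exact H.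
  - lra.
  - lra.
  - exists c. split; [exact Hc|].
    assert (c - a <> 0) by lra.
    assert (E2: (f c - f a - K*(g c - g a))/(c-a) = (f c - f a)/(c-a) - K*((g c - g a)/(c-a))) by (unfold Rdiv; ring).
    assert (E : f1 c - K * g1 c = (f c - f a - K*(g c - g a))/(c-a)).
    { destruct Hs; subst s.
      - replace (f1 c - K*g1 c) with (1 * f1 c + (- (1) * K) * g1 c) by ring. rewrite He. unfold Rdiv; ring.
      - replace (f1 c - K*g1 c) with (- (-1 * f1 c + (- (-1) * K) * g1 c)) by ring. rewrite He. unfold Rdiv; ring. }
    lra.
Qed.

Theorem mainTheorem4 (a b : R) (f g f1 g1 : R -> R) (f2a g2a : R) :
  a < b ->
  derive_on_closed f f1 a b ->
  derive_on_closed g g1 a b ->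
  is_right_derive f1 a f2a ->
  is_right_derive g1 a g2a ->
  g a <> g b ->
  let K := (f b - f a) / (g b - g a) in
  (f1 a - K * g1 a) * (f2a - K * g2a) > 0 ->
  exists eta, a < eta < b /\
    f1 eta - (f eta - f a) / (eta - a) =
    K * (g1 eta - (g eta - g a) / (eta - a)).
Proof.
  intros Hab Hf Hg F2 G2 Hne K HP.
  destruct (Rlt_dec 0 (f1 a - K * g1 a)) as [Hpos|Hnpos].
  - apply (main_s 1 a b f g f1 g1 f2a g2a); auto; fold K; try lra.
    destruct (Rlt_dec 0 (f2a - K * g2a)); [lra|].
    exfalso. assert ((f1 a - K * g1 a) * (f2a - K * g2a) <= 0).
    { apply Rmult_le_0_l; lra. }
    lra.
  - apply (main_s (-1) a b f g f1 g1 f2a g2a); auto; fold K; try lra.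
    + assert (f1 a - K * g1 a <> 0) by (intro E; rewrite E in HP; lra). lra.
    + destruct (Rlt_dec (f2a - K * g2a) 0); [lra|].
      exfalso. assert ((f1 a - K * g1 a) * (f2a - K * g2a) <= 0).
      { apply Rmult_le_0_r; lra. }
      lra.
Qed.
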